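(* A game tree $T$ is weakly finitely small in $\mathbf{Gmes}$ if and only if $T=\emptyset$.
   Context: A game tree is a set $T\subseteq M^{<\omega}$ (some set $M$) closed under initial segments such that every $t\in T$ has an extension $t^\frown x\in T$ (the empty set is a game tree); $|t|$ is the length and $t\restriction k$ the initial segment of length $k$. A map $f\colon T_1\to T_2$ is chronological if $|f(t)|=|t|$ and $f(t\restriction k)=f(t)\restriction k$ for all $t$ and $k\le|t|$. $\mathbf{Gmes}$ is the category of game trees and chronological maps; $\omega$ is a category via its order. A game tree $T$ is weakly finitely small in $\mathbf{Gmes}$ if for every functor $S\colon\omega\to\mathbf{Gmes}$ with colimit cocone $(q_n\colon S(n)\to L)_{n<\omega}$ in $\mathbf{Gmes}$ and every chronological map $f\colon T\to L$ there are $n<\omega$ and a chronological $\tilde f\colon T\to S(n)$ with $q_n\circ\tilde f=f$. *)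

(* Defs.v *)
From mathcomp Require Import all_boot.
Set Implicit Arguments. Unset Strict Implicit. Unset Printing Implicit Defensive.

Record GameTree := {
  gt_M : Type;
  gt_T : seq gt_M -> Prop;
  gt_prefix : forall t k, gt_T t -> gt_T (take k t);
  gt_extend : forall t, gt_T t -> exists x, gt_T (rcons t x)
}.

Definition node (T : GameTree) := {t : seq (gt_M T) | @gt_T T t}.

Definition chronological (T1 T2 : GameTree) (f : node T1 -> node T2) : Prop :=
  (forall t : node T1, size (proj1_sig (f t)) = size (proj1_sig t)) /\
  (forall (t s : node T1) (k : nat), k <= size (proj1_sig t) ->
     proj1_sig s = take k (proj1_sig t) ->
     proj1_sig (f s) = take k (proj1_sig (f t))).

(* A functor S : omega -> Gmes, omega viewed as the category of its order. *)
Record omegaDiagram := {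
  dg_obj : nat -> GameTree;
  dg_map : forall n m, n <= m -> node (dg_obj n) -> node (dg_obj m);
  dg_chrono : forall n m (h : n <= m), chronological (dg_map h);
  dg_id : forall n (h : n <= n) x, dg_map h x = x;
  dg_comp : forall n m p (hnm : n <= m) (hmp : m <= p) (hnp : n <= p) x,
      dg_map hnp x = dg_map hmp (dg_map hnm x)
}.

Definition is_cocone (S : omegaDiagram) (L : GameTree)
    (q : forall n, node (dg_obj S n) -> node L) : Prop :=
  (forall n, chronological (q n)) /\
  (forall n m (h : n <= m) x, q m (@dg_map S n m h x) = q n x).

Definition is_colimit (S : omegaDiagram) (L : GameTree)
    (q : forall n, node (dg_obj S n) -> node L) : Prop :=
  is_cocone q /\
  forall (X : GameTree) (g : forall n, node (dg_obj S n) -> node X),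
    is_cocone g ->
    exists u : node L -> node X,
      chronological u /\ (forall n x, u (q n x) = g n x) /\
      (forall v : node L -> node X, chronological v ->
         (forall n x, v (q n x) = g n x) -> forall y, v y = u y).

Definition weakly_finitely_small (T : GameTree) : Prop :=
  forall (S : omegaDiagram) (L : GameTree)
         (q : forall n, node (dg_obj S n) -> node L),
    is_colimit q ->
    forall f : node T -> node L, chronological f ->
    exists (n : nat) (ft : node T -> node (dg_obj S n)),
      chronological ft /\ forall x, q n (ft x) = f x.

Definition empty_tree (T : GameTree) : Prop := forall t, ~ @gt_T T t.

(* Main.v *)
Require Import Defs.
From mathcomp Require Import all_boot.
Set Implicit Arguments. Unset Strict Implicit. Unset Printing Implicit Defensive.

Definition Sp (n : nat) (t : seq bool) : bool := (size t <= n) || has id (take n.+1 t).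

Lemma has_take_mono (s : seq bool) a b : a <= b -> has id (take a s) -> has id (take b s).
Proof.
move=> ab h; rewrite -(cat_take_drop a (take b s)) has_cat.
by rewrite take_takel // h.
Qed.

Lemma Sp_prefix n t k : Sp n t -> Sp n (take k t).
Proof.
rewrite /Sp => /orP [h|h]; apply/orP.
  by left; rewrite size_take_min; apply: leq_trans (geq_minr _ _) h.
case: (leqP k n) => kn.
  by left; rewrite size_take_min; apply: leq_trans (geq_minl _ _) kn.
by right; rewrite take_takel.
Qed.

Lemma Sp_extend n t : Sp n t -> Sp n (rcons t true).
Proof.
rewrite /Sp => /orP [h|h]; apply/orP.
  rewrite size_rcons; case: (ltngtP (size t) n) => c.
  - by left.
  - by rewrite ltnNge h in c.
  right; rewrite take_oversize ?size_rcons -?c //.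
  by rewrite -cats1 has_cat orbT.
right; case: (ltnP n (size t)) => sz.
  by rewrite -cats1 takel_cat.
by rewrite take_oversize ?size_rcons // -cats1 has_cat orbT.
Qed.

Lemma Sp_mono n m t : n <= m -> Sp n t -> Sp m t.
Proof.
rewrite /Sp => nm /orP [h|h]; apply/orP.
  by left; apply: leq_trans nm.
by right; apply: has_take_mono h.
Qed.

Lemma Sp_self t : Sp (size t) t.
Proof. by rewrite /Sp leqnn. Qed.

Definition Stree (n : nat) : GameTree.
refine {| gt_M := bool; gt_T := fun t => is_true (Sp n t) |}.
- by move=> t k; apply: Sp_prefix.
- by move=> t h; exists true; apply: Sp_extend.
Defined.

Lemma Stree_eq n (x y : node (Stree n)) : proj1_sig x = proj1_sig y -> x = y.
Proof.
case: x => a pa; case: y => b pb /= e; subst b.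
by rewrite (eq_irrelevance pa pb).
Qed.

Definition Smap n m (h : n <= m) (x : node (Stree n)) : node (Stree m) :=
  exist _ (proj1_sig x) (Sp_mono h (proj2_sig x)).

Definition Sdiag : omegaDiagram.
refine {| dg_obj := Stree; dg_map := Smap |}.
- move=> n m h; split => //= t s k _ ->; by [].
- by move=> n h x; apply: Stree_eq.
- by move=> n m p h1 h2 h3 x; apply: Stree_eq.
Defined.

Definition Ltree : GameTree.
refine {| gt_M := bool; gt_T := fun _ => True |}.
- by [].
- by move=> t _; exists true.
Defined.

Lemma Ltree_eq (x y : node Ltree) : proj1_sig x = proj1_sig y -> x = y.
Proof. by case: x => a []; case: y => b [] /= ->. Qed.

Definition Lq n (x : node (Stree n)) : node Ltree := exist _ (proj1_sig x) I.

Lemma Lq_colim : is_colimit (S := Sdiag) (L := Ltree) Lq.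
Proof.
split.
  split.
    by move=> n; split => // t s k _ /= ->.
  by move=> n m h x; apply: Ltree_eq.
move=> X g [gchr gco].
pose u (y : node Ltree) : node X :=
  g (size (proj1_sig y)) (exist _ (proj1_sig y) (Sp_self (proj1_sig y))).
have key : forall n (x : node (Stree n)),
    u (exist _ (proj1_sig x) I) = g n x.
  move=> n x; rewrite /u /=.
  set m := maxn n (size (proj1_sig x)).
  rewrite -(gco _ m (leq_maxr _ _)) -(gco _ m (leq_maxl _ _)).
  by congr (g m _); apply: Stree_eq.
exists u; split; last split.
- split.
    by move=> t; rewrite /u (proj1 (gchr _)).
  move=> t s k kt e.
  have sz : size (proj1_sig s) <= size (proj1_sig t) by rewrite e size_take_min geq_minr.
  rewrite /u -(gco _ _ sz).
  apply: (proj2 (gchr _)) => //.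
- by move=> n x; rewrite -key; congr u; apply: Ltree_eq.
- move=> v _ hv y.
  have -> : y = Lq (exist (fun t => is_true (Sp (size (proj1_sig y)) t)) (proj1_sig y) (Sp_self _) : node (Stree (size (proj1_sig y)))) by apply: Ltree_eq.
  by rewrite hv /u.
Qed.

Lemma exists_size (T : GameTree) : forall k, (exists t, @gt_T T t) -> exists t, @gt_T T t /\ size t = k.
Proof.
move=> k [t0 h0]; elim: k => [|k [t [ht st]]].
  by exists (take 0 t0); split; [apply: gt_prefix|rewrite take0].
have [x hx] := gt_extend ht.
by exists (rcons t x); split; last rewrite size_rcons st.
Qed.

Theorem mainTheorem10 (T : GameTree) :
  weakly_finitely_small T <-> empty_tree T.
Proof.
split.
- move=> wfs t ht.
  pose f (x : node T) : node Ltree := exist _ (nseq (size (proj1_sig x)) false) I.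
  have fchr : chronological f.
    split; first by move=> x; rewrite /= size_nseq.
    move=> x s k kx e; rewrite /= e size_takel // take_nseq //.
  have [n [ft [_ hft]]] := wfs Sdiag Ltree Lq Lq_colim f fchr.
  have [s [hs ss]] := exists_size n.+1 (ex_intro _ t ht).
  have := hft (exist _ s hs).
  rewrite /Lq /f /= ss => /(f_equal (@proj1_sig _ _)) /= e.
  have := proj2_sig (ft (exist _ s hs)).
  rewrite /= e /Sp /= size_nseq ltnn /= take_oversize ?size_nseq //.
  by elim: n {e ss hft ft} => //.
- move=> emp S L q _ f _.
  exists 0, (fun x => False_rect _ (emp _ (proj2_sig x))).
  split; last by move=> x; case: (emp _ (proj2_sig x)).
  by split=> [x|x]; case: (emp _ (proj2_sig x)).
Qed.
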